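(* Let $\alpha>0$, let $\mathscr{K}$ be a convex feasible functional, and consider the augmented dual ascent scheme $$x^{n+1} = \operatorname{arg\,min}_{x} \mathscr{K}(x)+\langle x,\Lambda^n\rangle +\frac{\alpha}{2}\|x\|^2,\qquad \Lambda^{n+1} = \Lambda^{n} + \alpha\mathcal{P}_{\mathcal{M}^\perp}(x^{n+1}),\qquad \Lambda^0=0.$$ Define $\mathscr{J}(x)=\mathscr{K}(x)+\frac{\alpha}{2}\|\mathcal{P}_{\mathcal{M}}x\|^2$ and $h:\mathcal{H}\to\mathbb{R}$ by $h(\Lambda)=\min_x \mathscr{J}(x)+\langle x,\mathcal{P}_{\mathcal{M}^\perp}\Lambda\rangle=-\mathscr{J}^*(-\mathcal{P}_{\mathcal{M}^\perp}\Lambda)$. If $h$ attains its supremum, then $(\Lambda^{n})_{n=1}^\infty$ is a bounded sequence. In particular, this happens if $\mathscr{K}$ is a feasible finite-valued functional.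
   Context: $\mathcal{H}$ is a finite dimensional Hilbert space, $\mathcal{M}\subset\mathcal{H}$ a linear subspace, $\mathcal{P}_{\mathcal{M}}$, $\mathcal{P}_{\mathcal{M}^\perp}$ the orthogonal projections onto $\mathcal{M}$, $\mathcal{M}^\perp$. $\mathscr{J}^*$ denotes the Fenchel conjugate. A functional is called feasible if it is lower semi-continuous, proper, bounded below, and satisfies $\lim_{\|x\|\rightarrow\infty}\mathscr{K}(x)/\|x\|=\infty$. *)

(* Defs.v *)
From HB Require Import structures.
From mathcomp Require Import all_boot all_order all_algebra.
From mathcomp Require Import all_classical all_reals all_analysis.
Set Implicit Arguments. Unset Strict Implicit. Unset Printing Implicit Defensive.
Import Order.TTheory GRing.Theory Num.Theory.
Import numFieldNormedType.Exports.
Local Open Scope classical_set_scope.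
Local Open Scope ring_scope.

Section Defs.
Variables (R : realType) (n : nat).
Local Notation H := 'rV[R]_n.

Definition dot (x y : H) : R := (x *m y^T) 0 0.
Definition hnorm (x : H) : R := Num.sqrt (dot x x).

Definition is_subspace (M : set H) : Prop :=
  M 0 /\ forall (a : R) (x y : H), M x -> M y -> M (a *: x + y).

Definition orth_compl (M : set H) : set H :=
  [set y | forall x, M x -> dot x y = 0].

Definition is_orth_proj (M : set H) (P : H -> H) : Prop :=
  forall x, M (P x) /\ forall z, M z -> dot (x - P x) z = 0.

Definition lsc (K : H -> \bar R) : Prop :=
  forall x (a : R), (a%:E < K x)%E -> \forall y \near x, (a%:E < K y)%E.
Definition proper_fun (K : H -> \bar R) : Prop :=
  (forall x, K x != -oo%E) /\ exists x, K x \is a fin_num.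
Definition bounded_below (K : H -> \bar R) : Prop :=
  exists m : R, forall x, (m%:E <= K x)%E.
Definition superlinear (K : H -> \bar R) : Prop :=
  forall m : R, exists r : R, forall x, r < hnorm x ->
    (m%:E < K x * (hnorm x)^-1%:E)%E.
Definition feasible (K : H -> \bar R) : Prop :=
  [/\ lsc K, proper_fun K, bounded_below K & superlinear K].
Definition convex_fun (K : H -> \bar R) : Prop :=
  forall (t : R) (x y : H), 0 < t < 1 ->
    (K (t *: x + (1 - t) *: y)%R <= t%:E * K x + (1 - t)%:E * K y)%E.
End Defs.

(* Main.v *)
Require Import Defs.
From HB Require Import structures.
From mathcomp Require Import all_boot all_order all_algebra.
From mathcomp Require Import all_classical all_reals all_analysis.
From mathcomp Require Import ring lra.
Import Order.TTheory GRing.Theory Num.Theory.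
Import numFieldNormedType.Exports.
Local Open Scope classical_set_scope.
Local Open Scope ring_scope.

Section Dot.
Variables (R : realType) (n : nat).
Local Notation H := 'rV[R]_n.
Implicit Types x y z : H.

Lemma dotE x y : dot x y = \sum_i x 0 i * y 0 i.
Proof. by rewrite /dot !mxE; apply: eq_bigr => i _; rewrite mxE. Qed.

Lemma dotC x y : dot x y = dot y x.
Proof. by rewrite !dotE; apply: eq_bigr => i _; rewrite mulrC. Qed.

Lemma dotDl x y z : dot (x + y) z = dot x z + dot y z.
Proof. by rewrite !dotE -big_split; apply: eq_bigr => i _; rewrite mxE mulrDl. Qed.

Lemma dotZl a x y : dot (a *: x) y = a * dot x y.
Proof. by rewrite !dotE mulr_sumr; apply: eq_bigr => i _; rewrite mxE mulrA. Qed.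

Lemma dotNl x y : dot (- x) y = - dot x y.
Proof. by rewrite -scaleN1r dotZl mulN1r. Qed.

Lemma dotBl x y z : dot (x - y) z = dot x z - dot y z.
Proof. by rewrite dotDl dotNl. Qed.

Lemma dotDr x y z : dot x (y + z) = dot x y + dot x z.
Proof. by rewrite dotC dotDl !(dotC x). Qed.

Lemma dotZr a x y : dot x (a *: y) = a * dot x y.
Proof. by rewrite dotC dotZl dotC. Qed.

Lemma dotNr x y : dot x (- y) = - dot x y.
Proof. by rewrite dotC dotNl dotC. Qed.

Lemma dotBr x y z : dot x (y - z) = dot x y - dot x z.
Proof. by rewrite dotDr dotNr. Qed.

Lemma dot0l y : dot 0 y = 0.
Proof. by rewrite -(scale0r (0 : H)) dotZl mul0r. Qed.

Lemma dot0r y : dot y 0 = 0.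
Proof. by rewrite dotC dot0l. Qed.

Lemma dot_ge0 x : 0 <= dot x x.
Proof. by rewrite dotE; apply: sumr_ge0 => i _; rewrite -expr2 sqr_ge0. Qed.

Lemma dot_eq0 x : dot x x = 0 -> x = 0.
Proof.
rewrite dotE => /eqP; rewrite psumr_eq0; last by move=> i _; rewrite -expr2 sqr_ge0.
move=> /allP h; apply/rowP => i; rewrite mxE.
by have := h i (mem_index_enum i); rewrite -expr2 sqrf_eq0 => /eqP.
Qed.

Lemma dot_delta x (i : 'I_n) : dot x (delta_mx 0 i) = x 0 i.
Proof.
rewrite dotE (bigD1 i) //= [delta_mx 0 i 0 i]mxE !eqxx mulr1 big1 ?addr0 // => j /negPf ji.
by rewrite [delta_mx 0 i 0 j]mxE ji andbF mulr0.
Qed.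

Lemma hnorm2 x : hnorm x ^+ 2 = dot x x.
Proof. by rewrite /hnorm sqr_sqrtr // dot_ge0. Qed.

End Dot.
Arguments dotE {R n}. Arguments dotC {R n}. Arguments dotDl {R n}. Arguments dotZl {R n}.
Arguments dotNl {R n}. Arguments dotBl {R n}. Arguments dotDr {R n}. Arguments dotZr {R n}.
Arguments dotNr {R n}. Arguments dotBr {R n}. Arguments dot0l {R n}. Arguments dot0r {R n}.
Arguments dot_ge0 {R n}. Arguments dot_eq0 {R n}. Arguments dot_delta {R n}. Arguments hnorm2 {R n}.
Section Quad.
Variables (R : realType) (n : nat).
Local Notation H := 'rV[R]_n.
Implicit Types x y z : H.
Local Notation q x := (dot x x).
Lemma qD x y : q (x + y) = q x + q y + 2 * dot x y.
Proof. rewrite !dotDl !dotDr (dotC y x); ring. Qed.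

Lemma qB x y : q (x - y) = q x + q y - 2 * dot x y.
Proof. rewrite !dotDl !dotDr ?dotNl ?dotNr (dotC y x); ring. Qed.

Lemma qconv (t : R) (a b : H) : q (t *: a + (1 - t) *: b) =
  t * q a + (1 - t) * q b - t * (1 - t) * q (a - b).
Proof. rewrite !dotDl !dotDr !dotZl !dotZr ?dotNl ?dotNr ?dotBl ?dotBr (dotC b a); ring. Qed.

End Quad.
Arguments qD {R n}. Arguments qB {R n}. Arguments qconv {R n}.
Section Proj.
Variables (R : realType) (n : nat).
Local Notation H := 'rV[R]_n.
Implicit Types x y z : H.

Lemma subD (A : set H) x y : is_subspace A -> A x -> A y -> A (x + y).
Proof. by move=> [_ h] Sx Sy; have := h 1 x y Sx Sy; rewrite scale1r. Qed.
Lemma subZ (A : set H) a x : is_subspace A -> A x -> A (a *: x).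
Proof. by move=> [S0 h] Sx; have := h a x 0 Sx S0; rewrite addr0. Qed.
Lemma subN (A : set H) x : is_subspace A -> A x -> A (- x).
Proof. by move=> hS Sx; rewrite -scaleN1r; apply: subZ. Qed.
Lemma subB (A : set H) x y : is_subspace A -> A x -> A y -> A (x - y).
Proof. by move=> hS Sx Sy; apply: subD => //; apply: subN. Qed.

Lemma orth_sub (M : set H) : is_subspace (orth_compl M).
Proof.
split; first by move=> x _; rewrite dot0r.
by move=> a x y hx hy z Mz; rewrite dotDr dotZr hx // hy // mulr0 addr0.
Qed.

Lemma perp0 (A : set H) d : A d -> (forall z, A z -> dot d z = 0) -> d = 0.
Proof. by move=> Sd h; apply: dot_eq0; apply: h. Qed.

Lemma proj_fix (A : set H) P y : is_subspace A -> is_orth_proj A P -> A y -> P y = y.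
Proof.
move=> hS hP Sy; have [SP hp] := hP y.
apply/eqP; rewrite eq_sym -subr_eq0; apply/eqP; apply: (@perp0 A (y - P y)) hp; exact: subB.
Qed.

Lemma proj_lin (A : set H) P a x y : is_subspace A -> is_orth_proj A P ->
  P (a *: x + y) = a *: P x + P y.
Proof.
move=> hS hP; have [S1 h1] := hP (a *: x + y); have [S2 h2] := hP x; have [S3 h3] := hP y.
apply/eqP; rewrite -subr_eq0; apply/eqP; apply: (@perp0 A).
  by apply: subB => //; apply: subD => //; apply: subZ.
move=> z Sz.
have -> : P (a *: x + y) - (a *: P x + P y) = a *: (x - P x) + (y - P y) - (a *: x + y - P (a *: x + y)).
  by apply/rowP => i; rewrite !mxE; ring.
by rewrite dotBl dotDl dotZl h1 // h2 // h3 // mulr0 add0r subr0.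
Qed.

Lemma in_orth (M : set H) x y : M x -> orth_compl M y -> dot x y = 0.
Proof. by move=> Mx; apply. Qed.

Lemma PM_PMp (M : set H) PM PMp x : is_subspace M -> is_orth_proj M PM ->
  is_orth_proj (orth_compl M) PMp -> PM x = x - PMp x.
Proof.
move=> hM hPM hPMp; have [S1 h1] := hPM x; have [S2 h2] := hPMp x.
have o1 : orth_compl M (x - PM x) by move=> m Mm; rewrite dotC h1.
apply/eqP; rewrite -subr_eq0; apply/eqP.
have -> : PM x - (x - PMp x) = PMp x - (x - PM x) by apply/rowP => i; rewrite !mxE; ring.
apply: (@perp0 (orth_compl M) (PMp x - (x - PM x))).
  by apply: (@subB (orth_compl M)) => //; apply: orth_sub.
move=> z Mz.
have -> : PMp x - (x - PM x) = PM x - (x - PMp x) by apply/rowP => i; rewrite !mxE; ring.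
by rewrite dotBl h2 // subr0; apply: Mz.
Qed.

End Proj.
Arguments subD {R n A x y}. Arguments subZ {R n A} a {x}. Arguments subN {R n A x}. Arguments subB {R n A x y}.
Arguments proj_fix {R n A P y}. Arguments proj_lin {R n A P}. Arguments PM_PMp {R n M PM PMp} x.
Arguments perp0 {R n A d}. Arguments orth_sub {R n}.
Section Subgrad.
Variables (R : realType) (n : nat).
Local Notation H := 'rV[R]_n.
Variable phi : H -> R.
Hypothesis cvx : forall t a b, 0 < t < 1 ->
  phi (t *: a + (1 - t) *: b) <= t * phi a + (1 - t) * phi b.

Lemma cvx2 s u a b : 0 < s -> 0 < u ->
  (s + u) * phi ((s / (s + u)) *: a + (u / (s + u)) *: b) <= s * phi a + u * phi b.
Proof.
move=> s0 u0; have su0 : 0 < s + u by rewrite addr_gt0.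
have su0' : s + u != 0 by rewrite gt_eqF.
have ht : 0 < s / (s + u) < 1.
  by rewrite divr_gt0 //= ltr_pdivrMr // mul1r ltrDl.
have e1 : u / (s + u) = 1 - s / (s + u) by field.
rewrite e1; apply: (le_trans (ler_wpM2l (ltW su0) (cvx _ a b ht))).
by rewrite le_eqVlt; apply/orP; left; apply/eqP; field.
Qed.

Lemma key (A : set H) g e w w' s u : is_subspace A ->
  (forall w, A w -> phi 0 + dot w g <= phi w) -> A w -> A w' -> 0 < s -> 0 < u ->
  (phi 0 + dot w' g - phi (w' + (- u) *: e)) / u <= (phi (w + s *: e) - phi 0 - dot w g) / s.
Proof.
move=> hA hg Aw Aw' s0 u0; have su0 : 0 < s + u by rewrite addr_gt0.
have su0' : s + u != 0 by rewrite gt_eqF.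
have hp : (s / (s + u)) *: (w' + (- u) *: e) + (u / (s + u)) *: (w + s *: e)
   = (s / (s + u)) *: w' + (u / (s + u)) *: w.
  by apply/rowP => i; rewrite !mxE; field.
have h1 := @cvx2 s u (w' + (- u) *: e) (w + s *: e) s0 u0.
rewrite hp in h1.
have Ap : A ((s / (s + u)) *: w' + (u / (s + u)) *: w).
  by apply: subD => //; apply: subZ.
have h2 := hg _ Ap; rewrite dotDl !dotZl in h2.
have h3 := ler_wpM2l (ltW su0) h2.
have e3 : (s + u) * (phi 0 + (s / (s + u) * dot w' g + u / (s + u) * dot w g))
   = (s + u) * phi 0 + s * dot w' g + u * dot w g by field.
rewrite e3 in h3.
rewrite ler_pdivrMr // mulrAC ler_pdivlMr //.
set P1 := phi (w' + (- u) *: e) in h1 *; set P2 := phi (w + s *: e) in h1 *.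
set Pp := phi _ in h1 h3.
nra.
Qed.

Lemma ext_step (A : set H) g e : is_subspace A ->
  (forall w, A w -> phi 0 + dot w g <= phi w) ->
  exists c, forall w s, A w -> phi 0 + dot w g + s * c <= phi (w + s *: e).
Proof.
move=> hA hg.
pose B := [set a | exists w' u, [/\ A w', 0 < u &
   a = (phi 0 + dot w' g - phi (w' + (- u) *: e)) / u]].
have A0 : A 0 by case: hA.
have Bne : B !=set0 by exists ((phi 0 + dot 0 g - phi (0 + (- 1) *: e)) / 1); exists 0, 1.
have Bub : ubound B ((phi (0 + 1 *: e) - phi 0 - dot 0 g) / 1).
  by move=> a [w' [u [Aw' u0 ->]]]; exact: (@key A g e 0 w' 1 u hA hg A0 Aw' ltr01 u0).
have hsup : has_sup B by split => //; exists ((phi (0 + 1 *: e) - phi 0 - dot 0 g) / 1).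
exists (sup B) => w s Aw.
have [s0|s0|->] := ltgtP s 0; last by rewrite mul0r addr0 scale0r addr0; apply: hg.
- have u0 : 0 < - s by rewrite oppr_gt0.
  have : (phi 0 + dot w g - phi (w + (- (- s)) *: e)) / (- s) <= sup B.
    by apply: sup_upper_bound => //; exists w, (- s).
  rewrite opprK ler_pdivrMr //. nra.
- have : sup B <= (phi (w + s *: e) - phi 0 - dot w g) / s.
    by apply: ge_sup => // a [w' [u [Aw' u0 ->]]]; exact: (@key A g e w w' s u hA hg Aw Aw' s0 u0).
  rewrite ler_pdivlMr //. nra.
Qed.

Lemma subgrad : exists g, forall w, phi 0 + dot w g <= phi w.
Proof.
suff: forall k, (k <= n)%N -> exists g : H, forall w : H,
    (forall i : 'I_n, (k <= i)%N -> w 0 i = 0) -> phi 0 + dot w g <= phi w.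
  move=> /(_ n (leqnn n)) [g hg]; exists g => w; apply: hg => i.
  by rewrite leqNgt ltn_ord.
elim=> [_|k IH kn].
  exists 0 => w hw; have -> : w = 0 by apply/rowP => i; rewrite mxE hw.
  by rewrite dot0r addr0.
have [g hg] := IH (ltnW kn).
pose i0 : 'I_n := Ordinal kn.
pose e : H := delta_mx 0 i0.
pose A := [set w : H | forall i : 'I_n, (k <= i)%N -> w 0 i = 0].
have hA : is_subspace A.
  split; first by move=> i _; rewrite mxE.
  by move=> a x y Ax Ay i ki; rewrite !mxE Ax // Ay // mulr0 addr0.
have [c hc] := @ext_step A g e hA hg.
exists (g + (c - g 0 i0) *: e) => w hw.
pose s := w 0 i0.
have Aw1 : A (w - s *: e).
  move=> i ki; rewrite !mxE; have [->|ne] := eqVneq i i0.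
    by rewrite !eqxx mulr1 subrr.
  rewrite hw; last by rewrite ltn_neqAle ki andbT; apply: contra ne => /eqP h; apply/eqP/val_inj.
  by rewrite andbF mulr0 subrr.
have := hc _ s Aw1.
have -> : w - s *: e + s *: e = w by apply/rowP => i; rewrite !mxE; ring.
have -> : dot w (g + (c - g 0 i0) *: e) = dot (w - s *: e) g + s * c.
  have de : dot e e = 1 by rewrite dot_delta mxE !eqxx.
  have dw : dot (w - s *: e) e = 0 by rewrite dot_delta !mxE !eqxx mulr1 subrr.
  have dg : dot e g = g 0 i0 by rewrite dotC dot_delta.
  have -> : w = (w - s *: e) + s *: e by apply/rowP => i; rewrite !mxE; ring.
  rewrite dotDl !dotDr !dotZl !dotZr de dw dg.
  have -> : w - s *: e + s *: e - s *: e = w - s *: e by apply/rowP => i; rewrite !mxE; ring.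
  ring.
by rewrite addrA.
Qed.

End Subgrad.
Section Part1.
Variables (R : realType) (n : nat).
Local Notation H := 'rV[R]_n.
Local Notation q x := (dot x x).

Lemma strong (alpha : R) (K : H -> \bar R) (a0 : 0 < alpha) (cK : convex_fun K)
  (pK1 : forall x, K x != -oo%E) (xk Lk y : H) (kx ky : R)
  (Kx : K xk = kx%:E) (Ky : K y = ky%:E)
  (hx : forall z, (K xk + (dot xk Lk + alpha / 2 * q xk)%:E <=
                   K z + (dot z Lk + alpha / 2 * q z)%:E)%E) :
  alpha / 2 * q (y - xk) <=
  (ky + dot y Lk + alpha / 2 * q y) - (kx + dot xk Lk + alpha / 2 * q xk).
Proof.
set fy := ky + _ + _; set fx := kx + _ + _; set D := q (y - xk).
have D0 : 0 <= D by apply: dot_ge0.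
have ht : forall t, 0 < t < 1 -> alpha / 2 * t * (1 - t) * D <= t * (fy - fx).
  move=> t /andP[t0 t1].
  pose z := t *: y + (1 - t) *: xk.
  have Kz := cK t y xk (andb_true_intro (conj t0 t1)).
  rewrite Ky Kx -!EFinM -EFinD in Kz.
  have Kzf : K z \is a fin_num.
    rewrite fin_numE pK1 /= lt_eqF //; apply: le_lt_trans Kz _; exact: ltry.
  have hz := hx z.
  rewrite -(fineK Kzf) in Kz hz.
  rewrite Kx -!EFinD lee_fin in hz; rewrite lee_fin in Kz.
  set kz := fine (K z) in Kz hz.
  rewrite /z qconv (dotDl (t *: y)) !dotZl in hz.
  rewrite -/D in hz; rewrite /fy /fx.
  lra.
rewrite leNgt; apply/negP => hlt.
have d0 : 0 <= fy - fx.
  have h12 : ((0 : R) < 1 / 2) && (1 / 2 < 1 :> R) by apply/andP; split; lra.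
  have := ht _ h12; nra.
set c := alpha / 2 * D in hlt.
have c0 : 0 < c by lra.
pose t := (c - (fy - fx)) / (2 * c).
have t0 : 0 < t by rewrite divr_gt0 // ?subr_gt0 // mulr_gt0.
have c2 : 0 < 2 * c by lra.
have t1 : t < 1 by rewrite /t ltr_pdivrMr //; lra.
have h1 := ht t (andb_true_intro (conj t0 t1)).
have h2 : c * (1 - t) <= fy - fx.
  rewrite -(ler_pM2l t0); rewrite /c in h1 *; nra.
have h3 : c * (1 - t) = (c + (fy - fx)) / 2 by rewrite /t; field; rewrite gt_eqF.
lra.
Qed.

End Part1.
Section Main.
Variables (R : realType) (n : nat).
Local Notation H := 'rV[R]_n.
Implicit Types x y z : H.
Variables (M : set H) (PM PMp : H -> H).
Hypotheses (hM : is_subspace M) (hPM : is_orth_proj M PM)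
  (hPMp : is_orth_proj (orth_compl M) PMp).

Local Notation q x := (dot x x).

Lemma hMp : is_subspace (orth_compl M). Proof. exact: orth_sub. Qed.
Lemma P_in x : orth_compl M (PMp x). Proof. by have [] := hPMp x. Qed.
Lemma P_perp x z : orth_compl M z -> dot (x - PMp x) z = 0.
Proof. by have [_ h] := hPMp x; apply: h. Qed.
Lemma dot_P x z : orth_compl M z -> dot x z = dot (PMp x) z.
Proof. by move=> hz; apply/eqP; rewrite -subr_eq0 -dotBl P_perp. Qed.
Lemma P_fix y : orth_compl M y -> PMp y = y.
Proof. by move=> hy; apply: (proj_fix hMp hPMp hy). Qed.

Lemma qPM x : q (PM x) = q x - q (PMp x).
Proof.
rewrite (PM_PMp x hM hPM hPMp) qB (dot_P x (PMp x) (P_in x)); ring.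
Qed.

Lemma qP_le x y : q (PMp y - PMp x) <= q (y - x).
Proof.
pose r := (y - PMp y) - (x - PMp x).
have o : orth_compl M (PMp y - PMp x) := subB hMp (P_in y) (P_in x).
have hr : dot r (PMp y - PMp x) = 0 by rewrite /r dotBl !P_perp // subrr.
have e := qD (PMp y - PMp x) r.
rewrite dotC hr mulr0 addr0 in e.
have -> : y - x = (PMp y - PMp x) + r by apply/rowP => i; rewrite !mxE; ring.
by rewrite e lerDl dot_ge0.
Qed.


Lemma step2 (alpha : R) (a0 : 0 < alpha) (Lk xk p : H) (p_in : orth_compl M p)
  (Lk_in : orth_compl M Lk) (h : dot xk (Lk + alpha *: PMp xk) <= dot xk p) :
  q (Lk + alpha *: PMp xk - p) <= q (Lk - p).
Proof.
set L' := Lk + alpha *: PMp xk.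
have L'in : orth_compl M L' := subD hMp Lk_in (subZ alpha hMp (P_in xk)).
have hpos : 0 <= dot (PMp xk) (p - L').
  by rewrite -dot_P ?dotBr ?subr_ge0 //; exact: (subB hMp p_in L'in).
have e := qD (- (alpha *: PMp xk)) (L' - p).
have -> : Lk - p = (- (alpha *: PMp xk)) + (L' - p) by apply/rowP => i; rewrite !mxE; ring.
rewrite e.
have -> : dot (- (alpha *: PMp xk)) (L' - p) = alpha * dot (PMp xk) (p - L').
  rewrite dotNl dotZl !dotBr; ring.
have := dot_ge0 (- (alpha *: PMp xk)).
nra.
Qed.


Lemma part1 (alpha : R) (K : H -> \bar R) : 0 < alpha -> convex_fun K -> feasible K ->
  let J := fun x => (K x + (alpha / 2 * hnorm (PM x) ^+ 2)%:E)%E in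
  let h := fun L => ereal_inf [set (J x + (dot x (PMp L))%:E)%E | x in setT] in
  ((exists Lst, forall L, (h L <= h Lst)%E) ->
   forall (x L : nat -> 'rV[R]_n),
     L 0%N = 0 ->
     (forall k y, (K (x k.+1) + (dot (x k.+1) (L k) + alpha / 2 * hnorm (x k.+1) ^+ 2)%:E
                   <= K y + (dot y (L k) + alpha / 2 * hnorm y ^+ 2)%:E)%E) ->
     (forall k, L k.+1 = L k + alpha *: PMp (x k.+1)) ->
     exists B : R, forall k, (1 <= k)%N -> hnorm (L k) <= B).
Proof using hM hPM hPMp.
move=> a0 cK [lK [pK1 [y0 y0f]] bK sK] J h [Lst hLst] x L L0 hx hL.
set p := PMp Lst; have p_in : orth_compl M p := P_in Lst.
have Lin : forall k, orth_compl M (L k).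
  elim=> [|k IH]; first by rewrite L0; case: hMp.
  by rewrite hL; apply: (subD hMp IH (subZ alpha hMp (P_in _))).
have hx' : forall k z, (K (x k.+1) + (dot (x k.+1) (L k) + alpha / 2 * q (x k.+1))%:E
     <= K z + (dot z (L k) + alpha / 2 * q z)%:E)%E.
  by move=> k z; rewrite -!hnorm2; apply: hx.
have dec : forall k, q (L k.+1 - p) <= q (L k - p).
  move=> k; set xk := x k.+1.
  have Kf : K xk \is a fin_num.
    rewrite fin_numE pK1 /=; apply/negP => /eqP Kinf.
    have := hx' k y0; rewrite Kinf addye // -(fineK y0f) -EFinD leNgt ltry.
    by [].
  set kx := fine (K xk); have Kx : K xk = kx%:E by rewrite fineK.
  set L' := L k.+1.
  have hb : forall z, ((kx + alpha / 2 * q (PM xk) + dot xk L')%:E <= J z + (dot z L')%:E)%E.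
    move=> z; rewrite /J hnorm2.
    case Kz: (K z) => [kz| |]; last by have := pK1 z; rewrite Kz.
      rewrite -!EFinD lee_fin.
      have st := @strong R n alpha K a0 cK pK1 xk (L k) z kx kz Kx Kz (hx' k).
      have hq := qP_le xk z.
      have e1 := qB (PMp z) (PMp xk).
      rewrite e1 in hq.
      rewrite /L' hL !qPM !dotDr !dotZr (dot_P z (PMp xk) (P_in _)) (dot_P xk (PMp xk) (P_in _)).
      nra.
    by rewrite addye // leey.
  have c1 : ((kx + alpha / 2 * q (PM xk) + dot xk L')%:E <= h L')%E.
    rewrite /h (P_fix _ (Lin k.+1)); apply: le_ereal_inf_tmp => _ [z _ <-]; exact: hb z.
  have c2 : (h Lst <= J xk + (dot xk p)%:E)%E.
    by apply: ereal_inf_le; exists (J xk + (dot xk p)%:E) => //; exists xk.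
  have c3 := le_trans c1 (le_trans (hLst L') c2).
  rewrite /J Kx hnorm2 -!EFinD lee_fin in c3.
  rewrite /L' hL; apply: (@step2 alpha a0 (L k) xk p p_in (Lin k)).
  rewrite -hL; lra.
have bnd : forall k, q (L k - p) <= q p.
  elim=> [|k IH]; first by rewrite L0 sub0r dotNl dotNr opprK.
  exact: le_trans (dec k) IH.
exists (Num.sqrt (4 * q p)) => k _.
rewrite /hnorm; apply: ler_wsqrtr.
have e1 := qD (L k - p) p; have e2 := qB (L k - p) p.
have -> : L k = L k - p + p by apply/rowP => i; rewrite !mxE; ring.
rewrite e1; have := bnd k; have := dot_ge0 (L k - p - p); rewrite e2; lra.
Qed.


Lemma part2 (alpha : R) (K : H -> \bar R) : 0 < alpha -> convex_fun K -> feasible K ->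
  let J := fun x => (K x + (alpha / 2 * hnorm (PM x) ^+ 2)%:E)%E in
  let h := fun L => ereal_inf [set (J x + (dot x (PMp L))%:E)%E | x in setT] in
  ((forall x, K x \is a fin_num) -> exists Lst, forall L, (h L <= h Lst)%E).
Proof using hM hPM hPMp.
move=> a0 cK [lK pK [m0 hm0] sK] J h Kf.
pose k x := fine (K x).
have Ke : forall x, K x = (k x)%:E by move=> x; rewrite /k fineK.
pose jj x := k x + alpha / 2 * q (PM x).
have Je : forall x, J x = (jj x)%:E by move=> x; rewrite /J Ke hnorm2 -EFinD.
have jlb : forall x, m0 <= jj x.
  move=> x; have := hm0 x; rewrite Ke lee_fin => h1.
  have := dot_ge0 (PM x); rewrite /jj; nra.
have M0 : M 0 by case: hM.
pose phi w := inf [set jj (w + m) | m in M].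
have phi_lb : forall w m, M m -> phi w <= jj (w + m).
  move=> w m Mm; apply: ge_inf; last by exists m.
  by exists m0 => _ [m' _ <-].
have phi_glb : forall w r, (forall m, M m -> r <= jj (w + m)) -> r <= phi w.
  move=> w r hr; apply: lb_le_inf; first by exists (jj (w + 0)), 0.
  by move=> _ [m Mm <-]; apply: hr.
have PM0 : PM 0 = 0 by apply: (proj_fix hM hPM M0).
have PMZ : forall a x, PM (a *: x) = a *: PM x.
  by move=> a x; have := proj_lin a x 0 hM hPM; rewrite !addr0 PM0 addr0.
have PMD : forall x y, PM (x + y) = PM x + PM y.
  by move=> x y; have := proj_lin 1 x y hM hPM; rewrite !scale1r.
have jcvx : forall t a b, 0 < t < 1 -> jj (t *: a + (1 - t) *: b) <= t * jj a + (1 - t) * jj b.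
  move=> t a b ht; have := cK t a b ht; rewrite !Ke -!EFinM -EFinD lee_fin => hk.
  rewrite /jj PMD !PMZ qconv.
  case/andP: ht => t0 t1.
  have : 0 <= alpha / 2 * (t * (1 - t)) * q (PM a - PM b).
    have : 0 <= t * (1 - t) by rewrite mulr_ge0 // ?ltW // subr_gt0.
    have := dot_ge0 (PM a - PM b); have : 0 <= alpha / 2 by rewrite divr_ge0 // ltW.
    move=> h1 h2 h3; rewrite mulr_ge0 // mulr_ge0 //.
  lra.
have pcvx : forall t a b, 0 < t < 1 -> phi (t *: a + (1 - t) *: b) <= t * phi a + (1 - t) * phi b.
  move=> t a b ht; have /andP[t0 t1] := ht.
  have t1' : 0 < 1 - t by rewrite subr_gt0.
  set X := phi _.
  have h1 : forall m1 m2, M m1 -> M m2 -> X <= t * jj (a + m1) + (1 - t) * jj (b + m2).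
    move=> m1 m2 M1 M2.
    have Mc : M (t *: m1 + (1 - t) *: m2) by apply: subD hM (subZ t hM M1) (subZ (1 - t) hM M2).
    apply: le_trans (phi_lb _ _ Mc) _.
    have -> : t *: a + (1 - t) *: b + (t *: m1 + (1 - t) *: m2) = t *: (a + m1) + (1 - t) *: (b + m2).
      by apply/rowP => i; rewrite !mxE; ring.
    exact: jcvx.
  have h2 : forall m1, M m1 -> X <= t * jj (a + m1) + (1 - t) * phi b.
    move=> m1 M1.
    have : (X - t * jj (a + m1)) / (1 - t) <= phi b.
      apply: phi_glb => m2 M2; rewrite ler_pdivrMr //.
      have := h1 m1 m2 M1 M2; lra.
    rewrite ler_pdivrMr //; lra.
  have : (X - (1 - t) * phi b) / t <= phi a.
    apply: phi_glb => m1 M1; rewrite ler_pdivrMr //.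
    have := h2 m1 M1; lra.
  rewrite ler_pdivrMr //; lra.
have [g hg] := @subgrad R n phi pcvx.
have phi_sh : forall m, M m -> phi m <= phi 0.
  move=> m Mm; apply: phi_glb => m' Mm'.
  have := phi_lb m (m' - m) (subB hM Mm' Mm).
  by have -> : m + (m' - m) = 0 + m' by apply/rowP => i; rewrite !mxE; ring.
have gin : orth_compl M g.
  move=> m Mm; have h1 := hg m; have h2 := hg (- m).
  have := phi_sh m Mm; have := phi_sh (- m) (subN hM Mm).
  rewrite dotNl in h2; lra.
have gin' : orth_compl M (- g) := subN hMp gin.
exists (- g) => L.
have hup : (h L <= (phi 0)%:E)%E.
  have hm : forall m, M m -> (h L <= (jj m)%:E)%E.
    move=> m Mm; apply: ereal_inf_le; exists (J m + (dot m (PMp L))%:E); first by exists m.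
    by rewrite Je (P_in L m Mm) addr0.
  case hLe: (h L) => [r| |].
  - rewrite lee_fin; apply: phi_glb => m Mm; rewrite add0r.
    by have := hm m Mm; rewrite hLe lee_fin.
  - by have := hm 0 M0; rewrite hLe leye_eq.
  - exact: leNye.
apply: le_trans hup _.
rewrite /h (P_fix _ gin'); apply: le_ereal_inf_tmp => _ [z _ <-].
rewrite Je -EFinD lee_fin dotNr.
have := hg z; have := phi_lb z 0 M0; rewrite addr0; lra.
Qed.

End Main.

Theorem corollary1 (R : realType) (n : nat) (M : set 'rV[R]_n)
  (PM PMp : 'rV[R]_n -> 'rV[R]_n) (alpha : R) (K : 'rV[R]_n -> \bar R) :
  is_subspace M ->
  is_orth_proj M PM ->
  is_orth_proj (orth_compl M) PMp ->
  0 < alpha ->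
  convex_fun K -> feasible K ->
  let J := fun x => (K x + (alpha / 2 * hnorm (PM x) ^+ 2)%:E)%E in
  let h := fun L => ereal_inf [set (J x + (dot x (PMp L))%:E)%E | x in setT] in
  (* part 1: if h attains its supremum, the dual iterates are bounded *)
  ((exists Lst, forall L, (h L <= h Lst)%E) ->
   forall (x L : nat -> 'rV[R]_n),
     L 0%N = 0 ->
     (forall k y, (K (x k.+1) + (dot (x k.+1) (L k) + alpha / 2 * hnorm (x k.+1) ^+ 2)%:E
                   <= K y + (dot y (L k) + alpha / 2 * hnorm y ^+ 2)%:E)%E) ->
     (forall k, L k.+1 = L k + alpha *: PMp (x k.+1)) ->
     exists B : R, forall k, (1 <= k)%N -> hnorm (L k) <= B)
  /\
  (* part 2: for finite-valued (feasible) K, h attains its supremum *)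
  ((forall x, K x \is a fin_num) -> exists Lst, forall L, (h L <= h Lst)%E).
Proof.
move=> hM hPM hPMp a0 cK fK J h; split.
  exact: (@part1 R n M PM PMp hM hPM hPMp alpha K a0 cK fK).
exact: (@part2 R n M PM PMp hM hPM hPMp alpha K a0 cK fK).
Qed.
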